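(* Let $L$ be a finite lattice, let $\varphi$ be a capacity on $L$ and $\psi$ a completely monotone capacity on $L$ with Möbius inverse $f_\psi$. Let $\mathcal P$ be the set of probability mass functions $p$ on $\mathcal L\times L$ with $\sum_{(V,y):x\in V}p(V,y)=\varphi(x)$ and $\sum_{(V,y):y\le z}p(V,y)=\psi(z)$ for all $x,z\in L$. For $w\in R(\mathcal L\times L)$ define $B^{(\varphi,\psi)}(w)=\max_{p\in\mathcal P}\sum_{(V,y)}p(V,y)w(V,y)$ and $$S_{(\varphi,\psi)}(w)=\min\Big\{\psi(h)-S^\varphi(g):\ (g,h)\in R(\mathcal L)\times R(L),\ w(V,y)\le h(y)-g(V)\ \forall (V,y)\in\mathcal L\times L\Big\},$$ where $\psi(h)=\sum_{y\in L}f_\psi(y)h(y)$ and $S^\varphi(g)=\max\{\sum_{x\in L}r_x\varphi(x): \sum_{x\in V}r_x\le g(V)\ \forall V\in\mathcal L\}$. Then $B^{(\varphi,\psi)}(w)=S_{(\varphi,\psi)}(w)$ for every $w\in R(\mathcal L\times L)$.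
   Context: $L$ is a finite lattice with minimum $\hat0$, maximum $\hat1$, meet $\wedge$. A capacity on $L$ is a monotone $\varphi$ with $\varphi(\hat0)=0$, $\varphi(\hat1)=1$. Completely monotone: all iterated differences $\nabla_a\varphi(x)=\varphi(x)-\varphi(x\wedge a)$ are nonnegative; the Möbius inverse $f_\psi$ of $\psi$ is the unique function with $\psi(z)=\sum_{y\le z}f_\psi(y)$ (it is a probability mass function when $\psi$ is a completely monotone capacity). $\mathcal L$ is the set of nonempty up-sets of $L$ (subsets $U$ with $x\in U,x\le y\Rightarrow y\in U$). $R(S)$ denotes real-valued functions on a finite set $S$. In probabilistic terms, $p\in\mathcal P$ is the joint law of a pair $(\mathcal X,Y)$ with $\mathbb P(x\in\mathcal X)=\varphi(x)$ and $\mathbb P(Y\le z)=\psi(z)$. *)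

(* Defs.v *)
From HB Require Import structures.
From mathcomp Require Import all_boot all_order all_algebra.
Set Implicit Arguments. Unset Strict Implicit. Unset Printing Implicit Defensive.
Import Order.Theory GRing.Theory Num.Theory.

Section Defs.
Context {d : Order.disp_t} (L : finTBLatticeType d).

Definition is_upset (U : {set L}) : bool :=
  [forall x : L, forall y : L, ((x \in U) && (x <= y)%O) ==> (y \in U)].

(* \mathcal L : the nonempty up-sets of L, as a finite type *)
Definition nupset : Type := {U : {set L} | (U != set0) && is_upset U}.
HB.instance Definition _ := Finite.on nupset.

Context {R : realFieldType}.
Local Open Scope ring_scope.

Definition capacity (phi : L -> R) : Prop :=
  [/\ forall x y : L, (x <= y)%O -> phi x <= phi y,
      phi \bot%O = 0 & phi \top%O = 1].

Definition nabla (a : L) (f : L -> R) : L -> R := fun x => f x - f (Order.meet x a).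

Definition iter_nabla (s : seq L) (f : L -> R) : L -> R := foldr nabla f s.

Definition completely_monotone (psi : L -> R) : Prop :=
  forall (s : seq L) (x : L), 0 <= iter_nabla s psi x.

Definition moebius_inverse (psi f : L -> R) : Prop :=
  forall z : L, psi z = \sum_(y : L | (y <= z)%O) f y.

Definition coupling (phi psi : L -> R) (p : nupset -> L -> R) : Prop :=
  [/\ forall V y, 0 <= p V y,
      \sum_(V : nupset) \sum_(y : L) p V y = 1,
      forall x : L, \sum_(V : nupset | x \in sval V) \sum_(y : L) p V y = phi x
    & forall z : L, \sum_(V : nupset) \sum_(y : L | (y <= z)%O) p V y = psi z].

Definition is_max (E : R -> Prop) (v : R) : Prop := E v /\ forall u, E u -> u <= v.
Definition is_min (E : R -> Prop) (v : R) : Prop := E v /\ forall u, E u -> v <= u.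

Definition B_values (phi psi : L -> R) (w : nupset -> L -> R) : R -> Prop :=
  fun v => exists p, coupling phi psi p /\
    v = \sum_(V : nupset) \sum_(y : L) p V y * w V y.

Definition Sphi_values (phi : L -> R) (g : nupset -> R) : R -> Prop :=
  fun v => exists r : L -> R,
    (forall V : nupset, \sum_(x in sval V) r x <= g V) /\
    v = \sum_(x : L) r x * phi x.

Definition psi_int (fpsi h : L -> R) : R := \sum_(y : L) fpsi y * h y.

Definition S_values (phi fpsi : L -> R) (w : nupset -> L -> R) : R -> Prop :=
  fun v => exists (g : nupset -> R) (h : L -> R) (s : R),
    (forall (V : nupset) (y : L), w V y <= h y - g V) /\
    is_max (Sphi_values phi g) s /\
    v = psi_int fpsi h - s.

End Defs.

(* Main.v *)
Require Import Defs.
From HB Require Import structures.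
From mathcomp Require Import all_boot all_order all_algebra.
From mathcomp Require Import ring lra.
Set Implicit Arguments. Unset Strict Implicit. Unset Printing Implicit Defensive.
Import Order.Theory GRing.Theory Num.Theory.
Local Open Scope ring_scope.

Section LP.
Variable R : realFieldType.

Lemma exists_min (T : finType) (P : pred T) (f : T -> R) x0 :
  P x0 -> exists2 m, P m & forall y, P y -> f m <= f y.
Proof. by move=> Px0; case: (arg_minP f Px0) => m Pm H; exists m. Qed.

Lemma exists_max (T : finType) (P : pred T) (f : T -> R) x0 :
  P x0 -> exists2 m, P m & forall y, P y -> f y <= f m.
Proof. by move=> Px0; case: (arg_maxP f Px0) => m Pm H; exists m. Qed.

Lemma eqle (x y : R) : x = y -> x <= y. Proof. by move->. Qed.

Lemma sum_delta (I : finType) (p : I) (c : R) (F : I -> R) :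
  \sum_i (if i == p then c else 0) * F i = c * F p.
Proof.
rewrite (bigD1 p) //= eqxx big1 ?addr0 // => i /negbTE ->; by rewrite mul0r.
Qed.

Lemma sum_delta2 (I : finType) (p : I) (c : R) (F : I -> R) :
  \sum_i F i * (if p == i then c else 0) = F p * c.
Proof.
rewrite (bigD1 p) //= eqxx big1 ?addr0 // => i /negbTE; rewrite eq_sym => ->; by rewrite mulr0.
Qed.

Lemma sum_pull (I I' : finType) (l : I' -> R) (C : I' -> I -> R) (G : I -> R) :
  \sum_i (\sum_i' l i' * C i' i) * G i = \sum_i' l i' * \sum_i C i' i * G i.
Proof.
under eq_bigr do rewrite big_distrl.
rewrite exchange_big; apply: eq_bigr => i' _; rewrite big_distrr /=.
by apply: eq_bigr => i _; rewrite -mulrA.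
Qed.

Definition feasn n (I : finType) (A : I -> nat -> R) (b : I -> R) (x : nat -> R) :=
  forall i, \sum_(j < n) A i j * x j <= b i.
Definition certn n (I : finType) (A : I -> nat -> R) (b : I -> R) (l : I -> R) :=
  [/\ forall i, 0 <= l i, forall j, (j < n)%N -> \sum_i l i * A i j = 0
    & \sum_i l i * b i < 0].

Definition coef (I : finType) (a : I -> R) (i' : I + I * I) (i : I) : R :=
  match i' with
  | inl i0 => if (a i0 == 0) && (i == i0) then 1 else 0
  | inr (p, k) => if (0 < a p) && (a k < 0) then
       (if i == p then - a k else 0) + (if i == k then a p else 0) else 0
  end.

Lemma coef_ge0 (I : finType) (a : I -> R) i' i : 0 <= coef a i' i.
Proof.
case: i' => [i0|[p k]] /=; first by case: ifP.
case: ifP => // /andP[ap ak]; apply: addr_ge0; case: ifP => // _.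
  by rewrite oppr_ge0 ltW.
by rewrite ltW.
Qed.

Lemma coef_inl (I : finType) (a : I -> R) i0 (F : I -> R) :
  \sum_i coef a (inl i0) i * F i = if a i0 == 0 then F i0 else 0.
Proof.
rewrite /coef; case: ifP => h.
  by rewrite -[RHS]mul1r -(sum_delta i0); apply: eq_bigr => i _.
by rewrite big1 // => i _; rewrite mul0r.
Qed.

Lemma coef_inr (I : finType) (a : I -> R) p k (F : I -> R) :
  \sum_i coef a (inr (p, k)) i * F i =
  if (0 < a p) && (a k < 0) then - a k * F p + a p * F k else 0.
Proof.
rewrite /coef; case: ifP => h.
  under eq_bigr do rewrite mulrDl.
  by rewrite big_split /= !sum_delta.
by rewrite big1 // => i _; rewrite mul0r.
Qed.

Lemma coef_elim (I : finType) (a : I -> R) i' : \sum_i coef a i' i * a i = 0.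
Proof.
case: i' => [i0|[p k]]; first by rewrite coef_inl; case: eqP.
by rewrite coef_inr; case: ifP => // _; ring.
Qed.

Lemma FM n : forall (I : finType) (A : I -> nat -> R) (b : I -> R),
  (exists x, feasn n A b x) \/ (exists l, certn n A b l).
Proof.
elim: n => [|n IH] I A b.
  case: (boolP [exists i, b i < 0]) => [/existsP[i0 hi0]|/existsPn hn].
    right; exists (fun i => if i == i0 then 1 else 0); split => //.
    - by move=> i; case: ifP.
    - by rewrite sum_delta mul1r.
  left; exists (fun _ => 0) => i; rewrite big_ord0.
  by have := hn i; rewrite -leNgt.
pose a i := A i n.
pose A' i' j := \sum_i coef a i' i * A i j.
pose b' i' := \sum_i coef a i' i * b i.
case: (IH _ A' b') => [[x' hx']|[l' [hl0 hl hlb]]]; last first.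
  right; exists (fun i => \sum_i' l' i' * coef a i' i); split.
  - by move=> i; apply: sumr_ge0 => i' _; apply: mulr_ge0 => //; apply: coef_ge0.
  - move=> j; rewrite ltnS leq_eqVlt => /orP[/eqP ->|hj]; rewrite sum_pull.
      by rewrite big1 // => i' _; rewrite coef_elim mulr0.
    by apply: hl.
  - by rewrite sum_pull.
pose r i := b i - \sum_(j < n) A i j * x' j.
have key i' : 0 <= \sum_i coef a i' i * r i.
  have := hx' i'; rewrite /A' /b' /r.
  under eq_bigr do rewrite big_distrl /=.
  rewrite exchange_big /=.
  under [X in _ -> _ <= X]eq_bigr do rewrite mulrBr.
  rewrite sumrB subr_ge0 => H; apply: le_trans H; apply: eqle.
  by apply: eq_bigr => i _; rewrite big_distrr; apply: eq_bigr => j _; exact: mulrA.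
have kz i : a i = 0 -> 0 <= r i.
  by move=> h; have := key (inl i); rewrite coef_inl h eqxx.
pose u i := r i / a i.
have kpk p k : 0 < a p -> a k < 0 -> u k <= u p.
  move=> hp hk; have := key (inr (p, k)); rewrite coef_inr hp hk /=.
  have ep : r p = u p * a p by rewrite /u divfK // gt_eqF.
  have ek : r k = u k * a k by rewrite /u divfK // lt_eqF.
  rewrite ep ek => H.
  have : 0 <= (a p * - a k) * (u p - u k).
    by apply: le_trans H _; apply: eqle; ring.
  by rewrite pmulr_rge0 ?subr_ge0 // mulr_gt0 // oppr_gt0.
have [xn hxn] : exists xn, forall i, a i * xn <= r i.
  case: (boolP [exists k, a k < 0]) => [/existsP[k0 hk0]|/existsPn hn].
    have [km hkm hmax] := @exists_max _ (fun k => a k < 0) u _ hk0.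
    exists (u km) => i; case: (ltgtP (a i) 0) => hi.
    - have ei : r i = u i * a i by rewrite /u divfK // lt_eqF.
      rewrite ei; have := hmax i hi; nra.
    - have ei : r i = u i * a i by rewrite /u divfK // gt_eqF.
      rewrite ei; have := kpk i km hi hkm; nra.
    - by rewrite hi mul0r; apply: kz.
  exists (- \sum_i `|u i|) => i; case: (ltgtP (a i) 0) => hi.
  - by have := hn i; rewrite hi.
  - have ei : r i = u i * a i by rewrite /u divfK // gt_eqF.
    suff : - \sum_i0 `|u i0| <= u i by rewrite ei; nra.
    apply: (@le_trans _ _ (- `|u i|)); last by rewrite lerNl -normrN ler_norm.
    rewrite lerN2 (bigD1 i) //= lerDl; exact: sumr_ge0.
  - by rewrite hi mul0r; apply: kz.
left; exists (fun j => if j == n then xn else x' j) => i.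
rewrite big_ord_recr /= eqxx.
have -> : \sum_(j < n) A i (widen_ord (leqnSn n) j) *
    (if (widen_ord (leqnSn n) j : nat) == n then xn else x' (widen_ord (leqnSn n) j))
    = \sum_(j < n) A i j * x' j.
  by apply: eq_bigr => j _ /=; rewrite ifN // neq_ltn ltn_ord.
have := hxn i; rewrite /r /a; lra.
Qed.


Lemma farkas (I J : finType) (A : I -> J -> R) (b : I -> R) :
  (exists x : J -> R, forall i, \sum_j A i j * x j <= b i) \/
  (exists l : I -> R, [/\ forall i, 0 <= l i, forall j, \sum_i l i * A i j = 0
     & \sum_i l i * b i < 0]).
Proof.
pose A' i (k : nat) := if (insub k : option 'I_#|J|) is Some k' then A i (@enum_val J J k') else 0.
have eA i (k : 'I_#|J|) : A' i (nat_of_ord k) = A i (enum_val k).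
  rewrite /A'; case: insubP => [k' _ hk|]; last by rewrite ltn_ord.
  by have -> : k' = k by apply: val_inj.
case: (FM #|J| A' b) => [[x' hx']|[l [hl0 hl hlb]]].
  left; exists (fun j => x' (enum_rank j)) => i; apply: le_trans (hx' i).
  apply: eqle; rewrite (reindex (@enum_val J J)); last first.
    by apply: onW_bij; exact: enum_val_bij.
  by apply: eq_bigr => k _; rewrite enum_valK eA.
right; exists l; split => // j; have := hl _ (ltn_ord (enum_rank j)).
by under eq_bigr do rewrite eA enum_rankK.
Qed.

Definition pfeas (I J : finType) (A : I -> J -> R) (b : I -> R) (x : J -> R) :=
  forall i, \sum_j A i j * x j <= b i.
Definition dfeas (I J : finType) (A : I -> J -> R) (c : J -> R) (y : I -> R) :=
  (forall i, 0 <= y i) /\ forall j, \sum_i y i * A i j = c j.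

Lemma sum_swap (I J : finType) (y : I -> R) (A : I -> J -> R) (x : J -> R) :
  \sum_j (\sum_i y i * A i j) * x j = \sum_i y i * \sum_j A i j * x j.
Proof.
under eq_bigr do rewrite big_distrl /=.
rewrite exchange_big; apply: eq_bigr => i _; rewrite big_distrr.
by apply: eq_bigr => j _; rewrite /= mulrA.
Qed.

Lemma weak_dual (I J : finType) (A : I -> J -> R) b c x y :
  pfeas A b x -> dfeas A c y -> \sum_j c j * x j <= \sum_i y i * b i.
Proof.
move=> hx [hy0 hy].
have -> : \sum_j c j * x j = \sum_j (\sum_i y i * A i j) * x j.
  by apply: eq_bigr => j _; rewrite hy.
rewrite sum_swap; apply: ler_sum => i _; exact: ler_wpM2l.
Qed.

Lemma dual_alt (I J : finType) (A : I -> J -> R) (c : J -> R) :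
  (exists y, dfeas A c y) \/
  (exists x, (forall i, \sum_j A i j * x j <= 0) /\ 0 < \sum_j c j * x j).
Proof.
pose M (k : (I + J) + J) (i : I) : R := match k with
  | inl (inl i0) => if i == i0 then -1 else 0
  | inl (inr j) => A i j
  | inr j => - A i j end.
pose rhs (k : (I + J) + J) : R := match k with
  | inl (inl i0) => 0 | inl (inr j) => c j | inr j => - c j end.
case: (farkas M rhs) => [[y hy]|[l [hl0 hl hlb]]].
  left; exists y; split.
    move=> i; have := hy (inl (inl i)); rewrite /M /rhs.
    by rewrite sum_delta mulN1r oppr_le0.
  move=> j; apply/le_anti/andP; split.
    by have := hy (inl (inr j)); under eq_bigr do rewrite mulrC.
  have := hy (inr j); rewrite /M /rhs.
  under eq_bigr do rewrite mulNr.
  by rewrite sumrN lerN2; under eq_bigr do rewrite mulrC.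
right; pose g j := l (inl (inr j)) - l (inr j).
exists (fun j => - g j); split.
  move=> i; have := hl i; rewrite !big_sumType /= /M sum_delta2 mulrN1.
  under [X in _ + _ + X]eq_bigr do rewrite mulrN.
  rewrite sumrN => H.
  have -> : \sum_j A i j * - g j =
     - (\sum_j l (inl (inr j)) * A i j - \sum_j l (inr j) * A i j).
    by rewrite -sumrB -sumrN; apply: eq_bigr => j _; rewrite /g; ring.
  have := hl0 (inl (inl i)); lra.
have := hlb; rewrite !big_sumType /= /rhs.
rewrite big1 ?add0r; last by move=> i _; rewrite mulr0.
under [X in _ + X]eq_bigr do rewrite mulrN.
rewrite sumrN => H.
have -> : \sum_j c j * - g j =
   - (\sum_j l (inl (inr j)) * c j - \sum_j l (inr j) * c j).
  by rewrite -sumrB -sumrN; apply: eq_bigr => j _; rewrite /g; ring.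
lra.
Qed.

Lemma sum_unit (F : unit -> R) : \sum_(u : unit) F u = F tt.
Proof. by rewrite (bigD1 tt) //= big_pred0 ?addr0 // => -[]. Qed.

Lemma sum_mul0 (T : finType) (F : T -> R) : \sum_i F i * 0 = 0.
Proof. by rewrite big1 // => i _; rewrite mulr0. Qed.

Lemma sum_0mul (T : finType) (F : T -> R) : \sum_i 0 * F i = 0.
Proof. by rewrite big1 // => i _; rewrite mul0r. Qed.

Lemma strong_dual (I J : finType) (A : I -> J -> R) b c x0 y0 :
  pfeas A b x0 -> dfeas A c y0 ->
  exists x y, [/\ pfeas A b x, dfeas A c y & \sum_j c j * x j = \sum_i y i * b i].
Proof.
move=> hx0 hy0.
pose M (k : (((I + I) + J) + J) + unit) (v : J + I) : R := match k, v with
 | inl (inl (inl (inl i))), inl j => A i j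
 | inl (inl (inl (inl i))), inr _ => 0
 | inl (inl (inl (inr i))), inl _ => 0
 | inl (inl (inl (inr i))), inr i2 => if i2 == i then -1 else 0
 | inl (inl (inr j)), inl _ => 0
 | inl (inl (inr j)), inr i => A i j
 | inl (inr j), inl _ => 0
 | inl (inr j), inr i => - A i j
 | inr _, inl j => - c j
 | inr _, inr i => b i end.
pose rhs (k : (((I + I) + J) + J) + unit) : R := match k with
 | inl (inl (inl (inl i))) => b i
 | inl (inl (inl (inr i))) => 0
 | inl (inl (inr j)) => c j
 | inl (inr j) => - c j
 | inr _ => 0 end.
case: (farkas M rhs) => [[z hz]|[l [hl0 hl hlb]]].
  pose x j := z (inl j); pose y i := z (inr i).
  have px : pfeas A b x.
    by move=> i; have := hz (inl (inl (inl (inl i)))); rewrite big_sumType /= sum_0mul addr0.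
  have dy : dfeas A c y.
    split.
      move=> i; have := hz (inl (inl (inl (inr i)))); rewrite big_sumType /= sum_0mul add0r.
      by rewrite sum_delta mulN1r oppr_le0.
    move=> j; apply/le_anti/andP; split.
      have := hz (inl (inl (inr j))); rewrite big_sumType /= sum_0mul add0r.
      by under eq_bigr do rewrite mulrC.
    have := hz (inl (inr j)); rewrite big_sumType /= sum_0mul add0r.
    under eq_bigr do rewrite mulNr.
    by rewrite sumrN lerN2; under eq_bigr do rewrite mulrC.
  exists x, y; split => //; apply/le_anti/andP; split; first exact: weak_dual.
  have := hz (inr tt); rewrite big_sumType /=.
  under eq_bigr do rewrite mulNr.
  rewrite sumrN; under [X in _ + X]eq_bigr do rewrite mulrC.
  rewrite -/x -/y; lra.
pose l1 i := l (inl (inl (inl (inl i)))).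
pose mu i := l (inl (inl (inl (inr i)))).
pose g j := l (inl (inl (inr j))) - l (inl (inr j)).
pose t := l (inr tt).
have hA j : \sum_i l1 i * A i j = t * c j.
  have := hl (inl j); rewrite !big_sumType sum_unit /= !sum_mul0 !addr0.
  rewrite mulrN -/t => H; apply/eqP; rewrite -subr_eq0; exact/eqP.
have hE i : \sum_j A i j * g j = mu i - t * b i.
  have := hl (inr i); rewrite !big_sumType sum_unit /= !sum_mul0 add0r.
  rewrite sum_delta2 mulrN1.
  under [X in _ + _ + X + _]eq_bigr do rewrite mulrN.
  rewrite sumrN -/t -/(mu i) => H.
  have -> : \sum_j A i j * g j =
     \sum_j l (inl (inl (inr j))) * A i j - \sum_j l (inl (inr j)) * A i j.
    by rewrite -sumrB; apply: eq_bigr => j _; rewrite /g; ring.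
  lra.
have hB : \sum_i l1 i * b i + \sum_j c j * g j < 0.
  have := hlb; rewrite !big_sumType sum_unit /= !mulr0 !sum_mul0 !addr0.
  under [X in _ + _ + X]eq_bigr do rewrite mulrN.
  rewrite sumrN.
  have -> : \sum_j c j * g j =
     \sum_j l (inl (inl (inr j))) * c j - \sum_j l (inl (inr j)) * c j.
    by rewrite -sumrB; apply: eq_bigr => j _; rewrite /g; ring.
  rewrite -/l1 => H; lra.
have hQ : t * \sum_j c j * g j = \sum_i l1 i * mu i - t * \sum_i l1 i * b i.
  have E1 : t * \sum_j c j * g j = \sum_j (\sum_i l1 i * A i j) * g j.
    by rewrite big_distrr; apply: eq_bigr => j _; rewrite hA /= mulrA.
  have E2 : t * \sum_i l1 i * b i = \sum_i l1 i * (t * b i).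
    by rewrite big_distrr; apply: eq_bigr => i _; rewrite /= mulrCA.
  rewrite E1 E2 sum_swap -sumrB; apply: eq_bigr => i _; by rewrite hE mulrBr.
have hmu : 0 <= \sum_i l1 i * mu i.
  by apply: sumr_ge0 => i _; apply: mulr_ge0; apply: hl0.
have ht : 0 <= t by apply: hl0.
exfalso; case: (ltgtP 0 t) ht => // [tpos|t0] _.
  have : 0 <= t * (\sum_i l1 i * b i + \sum_j c j * g j).
    by rewrite mulrDr hQ; lra.
  by rewrite pmulr_rge0 // leNgt hB.
have hA0 j : \sum_i l1 i * A i j = 0 by rewrite hA -t0 mul0r.
have hE0 i : \sum_j A i j * g j = mu i by rewrite hE -t0 mul0r subr0.
have h1 : 0 <= \sum_i l1 i * b i.
  apply: (@le_trans _ _ (\sum_i l1 i * \sum_j A i j * x0 j)).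
    rewrite -sum_swap; rewrite big1 // => j _; by rewrite hA0 mul0r.
  apply: ler_sum => i _; apply: ler_wpM2l; [exact: hl0 | exact: hx0].
have h2 : 0 <= \sum_j c j * g j.
  case: hy0 => hy00 hy0c.
  have -> : \sum_j c j * g j = \sum_j (\sum_i y0 i * A i j) * g j.
    by apply: eq_bigr => j _; rewrite hy0c.
  rewrite sum_swap; apply: sumr_ge0 => i _; rewrite hE0; apply: mulr_ge0 => //.
  exact: hl0.
lra.
Qed.

End LP.

Section P.
Context {d : Order.disp_t} (L : finTBLatticeType d) {R : realFieldType}.

Lemma top_in (V : nupset L) : (\top%O : L) \in sval V.
Proof.
case: V => U /= /andP[/set0Pn[x hx] /forallP hu].
by have := hu x => /forallP /(_ \top%O) /implyP; apply; rewrite hx lex1.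
Qed.

Lemma layer_cake (r : L -> R) :
  (forall V : nupset L, \sum_(x in sval V) r x <= 0) ->
  forall n (U : {set L}), (#|U| <= n)%N -> is_upset U ->
  forall f : L -> R, (forall x, x \in U -> 0 <= f x) ->
  (forall x y, x \in U -> (x <= y)%O -> f x <= f y) ->
  \sum_(x in U) r x * f x <= 0.
Proof.
move=> hV; elim=> [|n IH] U hn hU f f0 fm.
  by move: hn; rewrite leqn0 cards_eq0 => /eqP ->; rewrite big_set0.
case: (set_0Vmem U) => [->|[x0 hx0]]; first by rewrite big_set0.
have [m hm hmin] : exists2 m, m \in U & forall y, y \in U -> f m <= f y.
  by case: (arg_minP f hx0) => m Pm H; exists m.
pose U' := [set x in U | f m < f x].
have hUne : (U != set0) && is_upset U by rewrite hU andbT; apply/set0Pn; exists x0.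
have hsumU : \sum_(x in U) r x <= 0 by have := hV (exist _ U hUne).
pose f' x := f x - f m.
have e1 : \sum_(x in U) r x * f x =
    \sum_(x in U) r x * f' x + f m * \sum_(x in U) r x.
  rewrite big_distrr /= -big_split /=; apply: eq_bigr => x _; rewrite /f'; ring.
have e2 : \sum_(x in U) r x * f' x = \sum_(x in U') r x * f' x.
  rewrite /U' big_mkcond [RHS]big_mkcond; apply: eq_bigr => x _; rewrite inE.
  case hx: (x \in U) => //=; case: ifP => // hlt.
  have e : f x = f m by apply/le_anti; rewrite hmin // andbT leNgt hlt.
  by rewrite /f' e subrr mulr0.
rewrite e1 e2.
have hlt : (#|U'| < #|U|)%N.
  apply: proper_card; apply/properP; split.
    by apply/subsetP => x; rewrite inE => /andP[].
  by exists m => //; rewrite inE hm ltxx.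
have h1 : \sum_(x in U') r x * f' x <= 0.
  apply: (IH U' _ _ f').
  - by rewrite -ltnS; apply: leq_trans hlt hn.
  - apply/forallP => x; apply/forallP => y; apply/implyP => /andP[].
    rewrite !inE => /andP[hxU hfx] hxy.
    have hyU : y \in U.
      by move/forallP: hU => /(_ x) /forallP /(_ y) /implyP; apply; rewrite hxU.
    by rewrite hyU /=; apply: lt_le_trans hfx (fm _ _ hxU hxy).
  - by move=> x; rewrite inE /f' subr_ge0 => /andP[_ /ltW].
  - move=> x y; rewrite inE /f' => /andP[hxU _] hxy; rewrite lerD2r; exact: fm.
have h2 : f m * \sum_(x in U) r x <= 0.
  by rewrite mulr_ge0_le0 // f0.
lra.
Qed.
End P.

Section P2.
Context {d : Order.disp_t} (L : finTBLatticeType d) {R : realFieldType}.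

Lemma iter_nablaE (psi f : L -> R) : moebius_inverse psi f ->
  forall s x, iter_nabla s psi x =
    \sum_(y | (y <= x)%O && all (fun a => ~~ (y <= a)%O) s) f y.
Proof.
move=> hf; elim=> [|a s IH] x /=.
  by rewrite hf; apply: eq_bigl => y; rewrite andbT.
rewrite /nabla !IH.
rewrite [X in X - _](bigID (fun y => (y <= a)%O)) /=.
have -> : \sum_(y | ((y <= Order.meet x a)%O && all (fun a0 => ~~ (y <= a0)%O) s)) f y
   = \sum_(i | ((i <= x)%O && all (fun a0 => ~~ (i <= a0)%O) s) && (i <= a)%O) f i.
  by apply: eq_bigl => y; rewrite lexI; case: (y <= x)%O; case: (y <= a)%O; rewrite ?andbT ?andbF.
rewrite addrAC subrr add0r; apply: eq_bigl => y.
by case: (y <= x)%O; case: (y <= a)%O; rewrite ?andbT ?andbF.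
Qed.

Lemma moebius_ge0 (psi f : L -> R) : moebius_inverse psi f ->
  completely_monotone psi -> forall z, 0 <= f z.
Proof.
move=> hf hcm z; have := hcm (enum [pred a | (a < z)%O]) z.
rewrite (iter_nablaE hf) (big_pred1 z) //.
move=> y /=; apply/idP/idP.
  case/andP => hyz /allP hall; apply/eqP; case: (eqVneq y z) => // hne.
  have hlt : (y < z)%O by rewrite lt_def eq_sym hne hyz.
  by have := hall y; rewrite mem_enum inE hlt lexx => /(_ isT).
move/eqP => ->; rewrite lexx /=; apply/allP => a; rewrite mem_enum inE => haz.
by apply/negP => hza; have := lt_le_trans haz hza; rewrite ltxx.
Qed.

Lemma moebius_uniq (m1 m2 : L -> R) :
  (forall z, \sum_(y | (y <= z)%O) m1 y = \sum_(y | (y <= z)%O) m2 y) ->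
  forall y, m1 y = m2 y.
Proof.
move=> h; suff H : forall n y, (#|[set y' : L | (y' < y)%O]| <= n)%N -> m1 y = m2 y.
  by move=> y; exact: H _ y (leqnn _).
elim=> [|n IH] y hn.
  have := h y; rewrite (bigD1 y) // [X in _ = X](bigD1 y) //=.
  have -> : \sum_(i | (i <= y)%O && (i != y)) m1 i = \sum_(i | (i <= y)%O && (i != y)) m2 i.
    apply: eq_bigr => y' /andP[h1 h2]; exfalso.
    move: hn; rewrite leqn0 cards_eq0 => /eqP /setP /(_ y'); rewrite !inE lt_def h1 eq_sym h2.
    by [].
  by move/addIr.
have := h y; rewrite (bigD1 y) // [X in _ = X](bigD1 y) //=.
have -> : \sum_(i | (i <= y)%O && (i != y)) m1 i = \sum_(i | (i <= y)%O && (i != y)) m2 i.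
  apply: eq_bigr => y' /andP[h1 h2]; apply: IH.
  have hlt : (y' < y)%O by rewrite lt_def h1 eq_sym h2.
  rewrite -ltnS; apply: leq_trans hn; apply: proper_card; apply/properP; split.
    by apply/subsetP => z; rewrite !inE => hz; apply: lt_trans hz hlt.
  by exists y'; rewrite !inE ?ltxx.
by move/addIr.
Qed.

Definition Amat (V : nupset L) (x : L) : R := if x \in sval V then 1 else 0.

Lemma sumA (V : nupset L) (r : L -> R) : \sum_x Amat V x * r x = \sum_(x in sval V) r x.
Proof.
rewrite [RHS]big_mkcond; apply: eq_bigr => x _; rewrite /Amat.
by case: ifP => _; rewrite ?mul1r ?mul0r.
Qed.

Lemma phi_ge0 (phi : L -> R) : capacity phi -> forall x, 0 <= phi x.
Proof. by case=> hm h0 _ x; rewrite -h0; apply: hm; exact: le0x. Qed.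

Lemma Q_exists (phi : L -> R) : capacity phi -> exists q, dfeas Amat phi q.
Proof.
move=> hphi; case: (dual_alt Amat phi) => // [[r [hr hpos]]]; exfalso.
have := @layer_cake _ L R r _ #|[set: L]| [set: L] (leqnn _) _ phi _ _.
have e : \sum_(x in [set: L]) r x * phi x = \sum_x phi x * r x.
  by apply: eq_big => [x|x _]; rewrite ?in_setT // mulrC.
rewrite e => H; suff : \sum_x phi x * r x <= 0 by rewrite leNgt hpos.
apply: H.
- by move=> V; rewrite -sumA.
- by rewrite /is_upset; apply/forallP => x; apply/forallP => y; by apply/implyP; rewrite in_setT.
- by move=> x _; apply: phi_ge0.
- by move=> x y _; case: hphi => hm _ _; apply: hm.
Qed.

Lemma Sphi_max (phi : L -> R) (g : nupset L -> R) : capacity phi ->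
  exists s, is_max (Sphi_values phi g) s.
Proof.
move=> hphi; have [q hq] := Q_exists hphi.
pose M := \sum_V `|g V|.
have hx0 : pfeas Amat g (fun x => if \top%O == x then - M else 0).
  move=> V; rewrite sum_delta2 /Amat top_in mul1r.
  apply: (@le_trans _ _ (- `|g V|)); last by rewrite lerNl -normrN ler_norm.
  by rewrite lerN2 /M (bigD1 V) //= lerDl; apply: sumr_ge0.
have [x [y [hx hy he]]] := strong_dual hx0 hq.
exists (\sum_x0 x x0 * phi x0); split.
  exists x; split; first by move=> V; rewrite -sumA.
  by [].
move=> u [r [hr ->]].
have hr' : pfeas Amat g r by move=> V; rewrite sumA.
have := weak_dual hr' hy; rewrite -he.
have e1 : forall z : L -> R, \sum_j z j * phi j = \sum_j phi j * z j.
  by move=> z; apply: eq_bigr => j _; rewrite mulrC.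
by rewrite !e1.
Qed.

End P2.

Section P3.
Context {d : Order.disp_t} (L : finTBLatticeType d) {R : realFieldType}.
Variables (phi psi fpsi : L -> R) (w : nupset L -> L -> R).

Lemma sum_pair (A B : finType) (F : A * B -> R) :
  \sum_p F p = \sum_a \sum_b F (a, b).
Proof. by rewrite pair_bigA; apply: eq_bigr => -[a b]. Qed.

Definition Irow := ((nupset L * L) + nupset L)%type.
Definition Jvar := ((nupset L + L) + L)%type.

Definition Mmat (i : Irow) (j : Jvar) : R := match i, j with
 | inl (V, y), inl (inl V') => if V' == V then 1 else 0
 | inl (V, y), inl (inr y') => if y' == y then -1 else 0
 | inl _, inr _ => 0
 | inr V, inl (inl V') => if V' == V then -1 else 0
 | inr V, inl (inr _) => 0
 | inr V, inr x => Amat V x end.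

Definition bvec (i : Irow) : R := match i with inl (V, y) => - w V y | inr _ => 0 end.
Definition cvec (j : Jvar) : R := match j with
 | inl (inl _) => 0 | inl (inr y) => - fpsi y | inr x => phi x end.

Lemma rowE1 V y (z : Jvar -> R) :
  \sum_j Mmat (inl (V, y)) j * z j = z (inl (inl V)) - z (inl (inr y)).
Proof.
by rewrite !big_sumType /= sum_0mul addr0 !sum_delta mul1r mulN1r.
Qed.

Lemma rowE2 V (z : Jvar -> R) :
  \sum_j Mmat (inr V) j * z j = - z (inl (inl V)) + \sum_(x in sval V) z (inr x).
Proof.
rewrite !big_sumType /= sum_0mul addr0 sum_delta mulN1r; congr (_ + _).
exact: sumA.
Qed.

Lemma colE1 V' (yv : Irow -> R) :
  \sum_i yv i * Mmat i (inl (inl V')) = \sum_y yv (inl (V', y)) - yv (inr V').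
Proof.
rewrite big_sumType /= sum_pair /=.
under eq_bigr do rewrite -big_distrl /=.
by rewrite sum_delta2 mulr1 sum_delta2 mulrN1.
Qed.

Lemma colE2 y' (yv : Irow -> R) :
  \sum_i yv i * Mmat i (inl (inr y')) = - \sum_V yv (inl (V, y')).
Proof.
rewrite big_sumType /= sum_pair /= sum_mul0 addr0 -sumrN.
by apply: eq_bigr => V _; rewrite sum_delta2 mulrN1.
Qed.

Lemma colE3 x (yv : Irow -> R) :
  \sum_i yv i * Mmat i (inr x) = \sum_V yv (inr V) * Amat V x.
Proof.
rewrite big_sumType /= sum_pair /= big1 ?add0r // => V _.
by rewrite sum_mul0.
Qed.

Lemma cE (z : Jvar -> R) : \sum_j cvec j * z j =
  - \sum_y fpsi y * z (inl (inr y)) + \sum_x phi x * z (inr x).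
Proof.
rewrite !big_sumType /= sum_0mul add0r; congr (_ + _).
by rewrite -sumrN; apply: eq_bigr => y _; rewrite mulNr.
Qed.

Lemma bE (yv : Irow -> R) : \sum_i yv i * bvec i =
  - \sum_V \sum_y yv (inl (V, y)) * w V y.
Proof.
rewrite big_sumType /= sum_mul0 addr0 sum_pair -sumrN; apply: eq_bigr => V _.
by rewrite -sumrN; apply: eq_bigr => y _; rewrite mulrN.
Qed.


Lemma sum_mulC (T : finType) (F G : T -> R) : \sum_i F i * G i = \sum_i G i * F i.
Proof. by apply: eq_bigr => i _; rewrite mulrC. Qed.

Lemma main_thm (hphi : capacity phi) (hpsi : capacity psi)
    (hcm : completely_monotone psi) (hf : moebius_inverse psi fpsi) :
  (forall g : nupset L -> R, exists s, is_max (Sphi_values phi g) s) /\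
  (exists v : R, is_max (B_values phi psi w) v /\ is_min (S_values phi fpsi w) v).
Proof.
split; first by move=> g; exact: Sphi_max.
have f0 := moebius_ge0 hf hcm.
have [q [hq0 hq]] := Q_exists hphi.
have sumq : \sum_V q V = 1.
  case: hphi => _ _ h1; rewrite -h1 -(hq \top%O); apply: eq_bigr => V _.
  by rewrite /Amat top_in mulr1.
have sumf : \sum_y fpsi y = 1.
  case: hpsi => _ _ h1; rewrite -h1 hf; apply: eq_bigl => y; by rewrite lex1.
pose M := \sum_V \sum_y `|w V y|.
pose z0 (j : Jvar) : R := match j with inl (inr _) => M | _ => 0 end.
have hz0 : pfeas Mmat bvec z0.
  case=> [[V y]|V].
  - rewrite rowE1 /= sub0r lerN2.
    apply: le_trans (ler_norm _) _; rewrite /M (bigD1 V) //= (bigD1 y) //= -addrA lerDl.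
    by apply: addr_ge0; apply: sumr_ge0 => *; [|apply: sumr_ge0 => *].
  - by rewrite rowE2 /= oppr0 add0r big1.
pose y0 (i : Irow) : R := match i with inl (V, y) => q V * fpsi y | inr V => q V end.
have hy0 : dfeas Mmat cvec y0.
  split.
    by case=> [[V y]|V] /=; [exact: mulr_ge0 | exact: hq0].
  case=> [[V'|y']|x] /=.
  - by rewrite colE1 /= -big_distrr /= sumf mulr1 subrr.
  - by rewrite colE2 /= -big_distrl /= sumq mul1r.
  - by rewrite colE3 /=; exact: hq x.
have [z [yv [hz hyv he]]] := strong_dual hz0 hy0.
pose p V y := yv (inl (V, y)).
pose v := \sum_V \sum_y p V y * w V y.
have hbv : \sum_i yv i * bvec i = - v by rewrite bE.
have coupling_of : forall p', coupling phi psi p' ->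
   dfeas Mmat cvec
     (fun i => match i with inl (V, y) => p' V y | inr V => \sum_y p' V y end).
  move=> p' [h0 h1 h2 h3]; split.
    by case=> [[V y]|V] /=; [exact: h0 | apply: sumr_ge0 => *].
  have hm : forall y, \sum_V p' V y = fpsi y.
    apply: moebius_uniq => z'; rewrite -hf -h3 exchange_big //.
  case=> [[V'|y']|x] /=.
  - by rewrite colE1 /= subrr.
  - by rewrite colE2 /= hm.
  - rewrite colE3 /= -h2 [RHS]big_mkcond; apply: eq_bigr => V _.
    by rewrite /Amat; case: ifP => _; rewrite ?mulr1 ?mulr0.
have hcp : coupling phi psi p.
  case: hyv => hyv0 hyvc.
  have hm y : \sum_V p V y = fpsi y.
    by have := hyvc (inl (inr y)); rewrite colE2 /= => /oppr_inj.
  have hqV V : \sum_y p V y = yv (inr V).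
    by have := hyvc (inl (inl V)); rewrite colE1 /= => /eqP; rewrite subr_eq0 => /eqP.
  split.
  - by move=> V y; exact: hyv0.
  - by rewrite exchange_big /=; under eq_bigr do rewrite hm; exact: sumf.
  - move=> x; have := hyvc (inr x); rewrite colE3 /= => <-.
    rewrite big_mkcond; apply: eq_bigr => V _.
    by rewrite hqV /Amat; case: ifP => _; rewrite ?mulr1 ?mulr0.
  - by move=> z'; rewrite exchange_big /=; under eq_bigr do rewrite hm; rewrite hf.
have hcz : \sum_j cvec j * z j = - v by rewrite he hbv.
rewrite cE in hcz.
exists v; split.
  split; first by exists p.
  move=> u [p' [hp' ->]].
  have := weak_dual hz (coupling_of p' hp'); rewrite he hbv bE /=.
  by rewrite lerN2.
split.
  have [s hs] := Sphi_max (fun V => z (inl (inl V))) hphi.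
  exists (fun V => z (inl (inl V))), (fun y => z (inl (inr y))), s; split.
    by move=> V y; have := hz (inl (V, y)); rewrite rowE1 /=; lra.
  split => //.
  case: hs => [[r [hr hsr]] hsmax].
  have ge : \sum_x z (inr x) * phi x <= s.
    apply: hsmax; exists (fun x => z (inr x)); split => // V.
    by have := hz (inr V); rewrite rowE2 /=; lra.
  pose z' (j : Jvar) := match j with inr x => r x | _ => z j end.
  have hz' : pfeas Mmat bvec z'.
    case=> [[V y]|V].
      by have := hz (inl (V, y)); rewrite !rowE1.
    by rewrite rowE2 /=; have := hr V; lra.
  have := weak_dual hz' hyv; rewrite hbv cE /=.
  rewrite hsr (sum_mulC r phi) (sum_mulC (fun x => z (inr x)) phi) in ge.
  rewrite hsr /psi_int (sum_mulC r phi).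
  lra.
move=> u [g [h [s [hgh [[[r [hr hsr]] hsmax] ->]]]]].
pose z' (j : Jvar) := match j with
  | inl (inl V) => g V | inl (inr y) => h y | inr x => r x end.
have hz' : pfeas Mmat bvec z'.
  case=> [[V y]|V].
    by rewrite rowE1 /=; have := hgh V y; lra.
  by rewrite rowE2 /=; have := hr V; lra.
have := weak_dual hz' hyv; rewrite hbv cE /=.
rewrite hsr /psi_int (sum_mulC r phi); lra.
Qed.

End P3.


Unset Implicit Arguments.

Theorem theorem4p2 (d : Order.disp_t) (L : finTBLatticeType d) (R : realFieldType)
    (phi psi fpsi : L -> R)
    (hphi : capacity phi) (hpsi : capacity psi) (hcm : completely_monotone psi)
    (hf : moebius_inverse psi fpsi) (w : nupset L -> L -> R) :
  (* S^phi(g) is well defined (the max exists) for every g *)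
  (forall g : nupset L -> R, exists s, is_max (Sphi_values phi g) s) /\
  (* B(w) (a max) and S(w) (a min) exist and coincide *)
  (exists v : R, is_max (B_values phi psi w) v /\ is_min (S_values phi fpsi w) v).
Proof.
exact: (main_thm w hphi hpsi hcm hf).
Qed.
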